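(* Let $v_1\ge v_2\ge v_3\ge v_4>0$ and $p_{ij}=\frac{v_i}{v_i+v_j}$. Let $T_A,T_B,T_C$ be the probabilities that team $a_1$ wins the four-team knockout tournament of type $A$, $B$, $C$ respectively (defined in the context). Then $T_A\ge T_B\ge T_C$.
   Context: Four teams $a_1,\dots,a_4$ with weights $v_1,\dots,v_4$. In any game between $a_i$ and $a_j$, $a_i$ wins with probability $p_{ij}=v_i/(v_i+v_j)$, independently of other games. A knockout tournament consists of two first-round games whose winners meet in a final. Tournament $A$: first round $a_1$ vs $a_4$ and $a_2$ vs $a_3$. Tournament $B$: first round $a_1$ vs $a_3$ and $a_2$ vs $a_4$. Tournament $C$: first round $a_1$ vs $a_2$ and $a_3$ vs $a_4$. *)

(* Defs.v *)
From Stdlib Require Import Reals.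
Open Scope R_scope.

Definition p (vi vj : R) : R := vi / (vi + vj).

(* Probability that a_1 (weight v1) wins a four-team knockout tournament whose
   first round is a_1 vs x and y vs z (weights vx, vy, vz): a_1 must beat x,
   then beat the winner of y vs z.  Games are independent. *)
Definition win_prob (v1 vx vy vz : R) : R :=
  p v1 vx * (p vy vz * p v1 vy + p vz vy * p v1 vz).

Definition T_A (v1 v2 v3 v4 : R) : R := win_prob v1 v4 v2 v3.
Definition T_B (v1 v2 v3 v4 : R) : R := win_prob v1 v3 v2 v4.
Definition T_C (v1 v2 v3 v4 : R) : R := win_prob v1 v2 v3 v4.

(* Main.v *)
Require Import Defs.
From Stdlib Require Import Reals Lra.
Open Scope R_scope.

Lemma win_eq (a x y z : R) : a > 0 -> x > 0 -> y > 0 -> z > 0 ->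
  win_prob a x y z = a^2 / ((a+x)*(a+y)*(a+z)) * (a + 2*(y*z)/(y+z)).
Proof. intros. unfold win_prob, p. field; repeat split; lra. Qed.

Lemma hm_mono (b c d : R) : b > 0 -> c >= d -> d > 0 ->
  2*(b*d)/(b+d) <= 2*(b*c)/(b+c).
Proof.
  intros. assert (E : 2*(b*c)/(b+c) - 2*(b*d)/(b+d) = 2*(b*b)*(c-d)/((b+c)*(b+d)))
    by (field; split; lra).
  assert (0 <= 2*(b*b)*(c-d)/((b+c)*(b+d))).
  { unfold Rdiv. apply Rmult_le_pos.
    - apply Rmult_le_pos; [|lra]. nra.
    - left. apply Rinv_0_lt_compat. nra. }
  lra.
Qed.

Theorem theorem2 (v1 v2 v3 v4 : R) :
  v1 >= v2 -> v2 >= v3 -> v3 >= v4 -> v4 > 0 ->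
  T_A v1 v2 v3 v4 >= T_B v1 v2 v3 v4 /\ T_B v1 v2 v3 v4 >= T_C v1 v2 v3 v4.
Proof.
  intros H1 H2 H3 H4. unfold T_A, T_B, T_C.
  rewrite !win_eq by lra.
  assert (K : v1 ^ 2 / ((v1 + v4) * (v1 + v2) * (v1 + v3)) = v1 ^ 2 / ((v1 + v3) * (v1 + v2) * (v1 + v4))
    /\ v1 ^ 2 / ((v1 + v2) * (v1 + v3) * (v1 + v4)) = v1 ^ 2 / ((v1 + v3) * (v1 + v2) * (v1 + v4))).
  { split; f_equal; ring. }
  destruct K as [-> ->].
  assert (P : 0 <= v1 ^ 2 / ((v1 + v3) * (v1 + v2) * (v1 + v4))).
  { unfold Rdiv. apply Rmult_le_pos. nra. left. apply Rinv_0_lt_compat.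
    apply Rmult_lt_0_compat; [apply Rmult_lt_0_compat|]; lra. }
  split; apply Rle_ge; apply Rmult_le_compat_l; auto; apply Rplus_le_compat_l.
  - apply hm_mono; lra.
  - assert (2 * (v3 * v4) / (v3 + v4) = 2 * (v4 * v3) / (v4 + v3)) as -> by (f_equal; [f_equal; ring| ring]).
    assert (2 * (v2 * v4) / (v2 + v4) = 2 * (v4 * v2) / (v4 + v2)) as -> by (f_equal; [f_equal; ring| ring]).
    apply hm_mono; lra.
Qed.
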